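(* Let $(G,u,v,\alpha,\beta)$ be a Guvab, and suppose it is not the case that ($G$ is bipartite, $\alpha=0$, and $\beta=1$). Then $W:=\lim_{k\to\infty}W(\mu_k,\nu_k)$ exists, and furthermore: (a) $W=0$ if one of the following holds: $0<\alpha\le\beta<1$; or $\alpha=\beta=1$ and $u=v$; or $G$ is not bipartite and $0=\alpha\le\beta<1$; or $\alpha=\beta=0$ and there is a walk from $u$ to $v$ with an even number of steps; (b) $W=1$ if $\alpha=\beta=0$ and $W\ne0$; (c) $W=\frac12$ if $0=\alpha<\beta<1$ and $G$ is bipartite.
   Context: A Guvab is a tuple $(G,u,v,\alpha,\beta)$ where $G$ is a finite, connected, simple graph, $u,v\in V(G)$, and $\alpha,\beta\in[0,1]$ with $\alpha\le\beta$. A random walk on $G$ with starting vertex $w$ and laziness $\gamma$ is the Markov chain $R_0=w$ and, for $i\ge1$, $R_i=R_{i-1}$ with probability $\gamma$ and $R_i=t$ with probability $\frac{1-\gamma}{\deg(R_{i-1})}$ for each neighbor $t$ of $R_{i-1}$. $\mu_k$ is the distribution after $k$ steps of the walk from $u$ with laziness $\alpha$, and $\nu_k$ that of the walk from $v$ with laziness $\beta$. $W(\mu,\nu)$ is the Wasserstein ($L^1$ optimal transport) distance with respect to the graph distance: the minimum over transportation plans (nonnegative $T$ on $V(G)\times V(G)$ with marginals $\mu,\nu$) of $\sum d(w_1,w_2)T(w_1,w_2)$. *)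

(* Defs.v *)
From HB Require Import structures.
From mathcomp Require Import all_boot all_order all_algebra.
From mathcomp Require Import all_classical all_reals all_analysis.
Set Implicit Arguments. Unset Strict Implicit. Unset Printing Implicit Defensive.
Import Order.TTheory GRing.Theory Num.Theory.
Import numFieldNormedType.Exports.
Local Open Scope ring_scope.
Local Open Scope classical_set_scope.

Section Guvab.
Variables (R : realType) (T : finType) (e : rel T).

Definition simple_graph := symmetric e /\ irreflexive e.
Definition connected_graph := forall x y : T, connect e x y.

Definition bipartite := exists c : T -> bool, forall x y, e x y -> c x != c y.

Fixpoint walkn (n : nat) (x y : T) : bool :=
  match n with
  | 0 => x == y
  | n'.+1 => [exists z, e x z && walkn n' z y]
  end.

(* graph distance: least n with a walk of length n (shortest walks in a
   connected graph have length < #|T|) *)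
Definition gdist (x y : T) : nat :=
  \big[minn/#|T|]_(n < #|T| | walkn n x y) n.

Definition deg (x : T) : nat := #|[set y | e x y]|.

Definition trans (g : R) (x y : T) : R :=
  if x == y then g else if e x y then (1 - g) / (deg x)%:R else 0.

Fixpoint walk_dist (g : R) (w : T) (k : nat) : T -> R :=
  match k with
  | 0 => fun y => if y == w then 1 else 0
  | k'.+1 => fun y => \sum_(x : T) walk_dist g w k' x * trans g x y
  end.

Definition transport_plan (mu nu : T -> R) (P : T -> T -> R) :=
  (forall x y, 0 <= P x y) /\
  (forall x, \sum_(y : T) P x y = mu x) /\
  (forall y, \sum_(x : T) P x y = nu y).

Definition plan_cost (P : T -> T -> R) : R :=
  \sum_(x : T) \sum_(y : T) (gdist x y)%:R * P x y.

Definition wass (mu nu : T -> R) : R :=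
  inf [set c | exists P, transport_plan mu nu P /\ c = plan_cost P].

End Guvab.

(* Main.v *)
Require Import Defs.
From HB Require Import structures.
From mathcomp Require Import all_boot all_order all_algebra.
From mathcomp Require Import all_classical all_reals all_analysis.
From mathcomp Require Import ring lra.
Import Order.TTheory GRing.Theory Num.Theory.
Import numFieldNormedType.Exports.
Local Open Scope ring_scope.
Set Implicit Arguments. Unset Strict Implicit. Unset Printing Implicit Defensive.
Local Open Scope classical_set_scope.
Section Analysis.
Variable R : realType.

Lemma geom_small (q C d : R) : 0 <= q < 1 -> 0 < d -> exists j : nat, q ^+ j * C < d.
Proof.
move=> /andP[q0 q1] d0.
have C1 : 0 < `|C| + 1 by rewrite ltr_pwDr // normr_ge0.
have hc := cvg_expr (R := R) (z := q).
have : `|q| < 1 by rewrite ger0_norm.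
move=> /hc /cvgrPdist_lt /(_ (d / (`|C| + 1))) [].
  by rewrite divr_gt0.
move=> N _ HN; exists N.
have := HN N (leqnn N); rewrite /= sub0r normrN ger0_norm ?exprn_ge0 //.
move=> h; apply: (le_lt_trans (ler_norm _)).
rewrite normrM ger0_norm ?exprn_ge0 //.
apply: (le_lt_trans (y := q ^+ N * (`|C| + 1))).
  by rewrite ler_wpM2l ?exprn_ge0 // lerDl.
by rewrite -ltr_pdivlMr.
Qed.

Lemma cvg_bridge (f : nat -> R) (W : R) :
  (forall eps, 0 < eps -> exists K, forall k, (K <= k)%N -> `|f k - W| < eps) ->
  f @ \oo --> W.
Proof.
move=> H; apply/cvgrPdist_lt => eps /H [K HK].
exists K => // k /= hk; rewrite distrC; exact: HK.
Qed.
End Analysis.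

Section Walks.
Variables (T : finType) (e : rel T).
Hypothesis esym : symmetric e.
Hypothesis eirr : irreflexive e.

Lemma walknS_last n x y :
  walkn e n.+1 x y = [exists z, walkn e n x z && e z y].
Proof.
elim: n x => [|n IH] x.
  apply/existsP/existsP => [[z /andP[xz /eqP <-]]|[z /andP[/eqP <- zy]]].
    by exists x; rewrite /= eqxx.
  by exists y; rewrite zy eqxx.
apply/existsP/existsP => [[z /andP[xz hz]]|[z /andP[hz zy]]].
  have : walkn e n.+1 z y := hz.
  rewrite IH => /existsP[t /andP[zt ty]].
  by exists t; rewrite ty andbT; apply/existsP; exists z; rewrite xz.
have : walkn e n.+1 x z := hz.
move=> /existsP[t /andP[xt tz]].
exists t; rewrite xt /=; change (walkn e n.+1 t y); rewrite IH.
by apply/existsP; exists z; rewrite zy andbT; exact: tz.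
Qed.

Lemma walkn_cat a b x y z : walkn e a x y -> walkn e b y z -> walkn e (a + b) x z.
Proof.
elim: a x => [|a IH] x /=; first by move=> /eqP ->.
move=> /existsP[t /andP[xt ty]] hb; apply/existsP; exists t.
by rewrite xt (IH _ ty hb).
Qed.

Lemma walkn_rev n x y : walkn e n x y -> walkn e n y x.
Proof.
elim: n x y => [|n IH] x y; first by rewrite /= eq_sym.
move=> /existsP[t /andP[xt ty]]; rewrite walknS_last.
by apply/existsP; exists t; rewrite (IH _ _ ty) esym.
Qed.

Lemma walkn_parity (c : T -> bool) :
  (forall x y, e x y -> c x != c y) ->
  forall n x y, walkn e n x y -> c y = c x (+) odd n.
Proof.
move=> hc; elim=> [|n IH] x y /=; first by move=> /eqP ->; rewrite addbF.
move=> /existsP[t /andP[xt ty]]; rewrite (IH _ _ ty).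
by move: (hc _ _ xt); case: (c x); case: (c t); case: (odd n).
Qed.

Lemma path_walkn x p : path e x p -> walkn e (size p) x (last x p).
Proof.
elim: p x => [|z p IH] x /=; first by rewrite eqxx.
by move=> /andP[xz pz]; apply/existsP; exists z; rewrite xz IH.
Qed.

Lemma conn_walkn x y : connect e x y -> exists n, walkn e n x y.
Proof. by move=> /connectP[p pp ->]; exists (size p); apply: path_walkn. Qed.

Hypothesis econn : connected_graph e.
Hypothesis hT : (1 < #|T|)%N.

Lemma has_nbr x : exists z, e x z.
Proof.
have [y xy] : exists y, y != x.
  move/card_gt1P: hT => [a [b [_ _ ab]]].
  case: (eqVneq a x) => [ax|ax]; last by exists a.
  by exists b; rewrite -ax eq_sym.
have [n hn] := conn_walkn (econn x y).
case: n hn => [|n] /=; first by rewrite eq_sym (negbTE xy).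
by move=> /existsP[z /andP[xz _]]; exists z.
Qed.

Lemma deg_gt0 x : (0 < deg e x)%N.
Proof.
have [z xz] := has_nbr x.
by apply/card_gt0P; exists z; rewrite inE.
Qed.

Lemma walkn_pad2 n x y : walkn e n x y -> walkn e n.+2 x y.
Proof.
move=> h; have [z yz] := has_nbr y.
have h1 : walkn e n.+1 x z by rewrite walknS_last; apply/existsP; exists y; rewrite h.
by rewrite walknS_last; apply/existsP; exists z; rewrite h1 esym.
Qed.

Lemma walkn_padm n j x y : walkn e n x y -> walkn e (n + j.*2) x y.
Proof.
move=> h; elim: j => [|j IH]; first by rewrite addn0.
by rewrite doubleS !addnS; apply: walkn_pad2.
Qed.

Lemma dist_choice (r : T) : exists d : T -> nat,
  forall x, walkn e (d x) x r /\ walkn e (d x) r x.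
Proof.
have H : forall x, exists n, walkn e n x r.
  by move=> x; apply: conn_walkn.
exists (fun x => ex_minn (H x)) => x.
case: ex_minnP => n hn _; split => //; exact: walkn_rev.
Qed.

Lemma sum_le_nat (d : T -> nat) x : (d x <= \sum_(z : T) d z)%N.
Proof. by rewrite (bigD1 x) //= leq_addr. Qed.


Lemma some_vertex : exists r : T, True.
Proof. by move/card_gt1P: hT => [a [b _]]; exists a. Qed.

Lemma pad_to n N x y : walkn e n x y -> (n <= N)%N -> ~~ odd (N - n) ->
  walkn e N x y.
Proof.
move=> w nN ev.
have h := odd_double_half (N - n); rewrite (negbTE ev) add0n in h.
have -> : N = (n + (N - n)./2.*2)%N by rewrite h subnKC.
exact: walkn_padm.
Qed.

Lemma walk_bounded : exists N, forall x y, exists n, (n <= N)%N /\ walkn e n x y.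
Proof.
have [r _] := some_vertex; have [d hd] := dist_choice r.
exists ((\sum_z d z).*2) => x y; exists (d x + d y)%N; split.
  by rewrite -addnn leq_add // sum_le_nat.
by apply: walkn_cat (proj1 (hd x)) (proj2 (hd y)).
Qed.

Lemma bip_allN (c : T -> bool) : (forall x y, e x y -> c x != c y) ->
  exists N, ~~ odd N /\ (0 < N)%N /\ forall x y, c x = c y -> walkn e N x y.
Proof.
move=> hc; have [r _] := some_vertex; have [d hd] := dist_choice r.
exists ((\sum_z d z).*2.+2); split; first by rewrite /= odd_double.
split => // x y cxy.
have w := walkn_cat (proj1 (hd x)) (proj2 (hd y)).
have par := walkn_parity hc w; rewrite cxy in par.
apply: (pad_to w).
  by apply: leqW; apply: leqW; rewrite -addnn leq_add // sum_le_nat.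
rewrite oddB /=; last first.
  by apply: leqW; apply: leqW; rewrite -addnn leq_add // sum_le_nat.
by rewrite odd_double; move: par; case: (c y); case: (odd _).
Qed.

Lemma bip_of_noodd : (forall x L, odd L -> ~~ walkn e L x x) -> bipartite e.
Proof.
move=> H; have [r _] := some_vertex; have [d hd] := dist_choice r.
exists (fun x => odd (d x)) => x y xy; apply/negP => /eqP eq.
have w1 : walkn e (d x + 1) r y.
  apply: walkn_cat (proj2 (hd x)) _ => /=; apply/existsP; exists y; by rewrite xy eqxx.
have w2 := walkn_cat w1 (proj1 (hd y)).
move: (H r (d x + 1 + d y)%N); rewrite w2 => /(_ _) /negP; apply => //.
by rewrite !oddD eq /=; case: (odd (d y)).
Qed.

Lemma nonbip_allN : ~ bipartite e -> exists N, (0 < N)%N /\ forall x y, walkn e N x y.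
Proof.
move=> nb.
have [x0 [L [oL wL]]] : exists x L, odd L /\ walkn e L x x.
  case: (pselect (exists x L, odd L /\ walkn e L x x)) => // H; exfalso.
  apply: nb; apply: bip_of_noodd => x L oL; apply/negP => w; apply: H.
  by exists x, L.
have [d hd] := dist_choice x0.
set S := (\sum_z d z)%N.
exists (S.*2 + L)%N; split; first by move: oL; case: L {wL} => // *; rewrite addnS.
move=> x y.
have le1 : (d x + d y <= S.*2)%N by rewrite -addnn leq_add // sum_le_nat.
have w1 := walkn_cat (proj1 (hd x)) (proj2 (hd y)).
have w2 := walkn_cat (walkn_cat (proj1 (hd x)) wL) (proj2 (hd y)).
case: (boolP (odd (S.*2 + L - (d x + d y)))) => od; last first.
  by apply: (pad_to w1) => //; apply: leq_trans le1 (leq_addr _ _).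
apply: (pad_to w2).
  by rewrite addnAC leq_add2r.
have -> : (S.*2 + L - (d x + L + d y) = S.*2 + L - (d x + d y) - L)%N.
  by rewrite addnAC subnDA.
rewrite oddB ?od ?oL //.
by rewrite leq_subRL ?leq_add2r // (leq_trans le1) ?leq_addr.
Qed.

End Walks.

Section Prob.
Variables (R : realType) (T : finType) (e : rel T).
Hypothesis esym : symmetric e.
Hypothesis eirr : irreflexive e.
Hypothesis econn : connected_graph e.
Hypothesis hT : (1 < #|T|)%N.
Implicit Types (g : R) (s a b : T -> R).

Definition step (g : R) (s : T -> R) : T -> R :=
  fun y => \sum_x s x * trans e g x y.
Definition stepn g k s := iter k (step g) s.
Definition delta (w : T) : T -> R := fun y => if y == w then 1 else 0.
Definition l1 (s : T -> R) := \sum_x `|s x|.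

Lemma deg_sum x : (deg e x)%:R = \sum_y (if e x y then 1 else 0) :> R.
Proof.
have -> : deg e x = #|[pred y | e x y]|.
  rewrite /deg; apply: eq_card => y.
  by rewrite /in_mem /= /in_set asboolb.
rewrite -sum1_card natr_sum big_mkcond; apply: eq_bigr => y _.
by rewrite inE; case: (e x y).
Qed.

Lemma deg_neq0 x : (deg e x)%:R != 0 :> R.
Proof. by rewrite pnatr_eq0 -lt0n deg_gt0. Qed.

Lemma sum_edge x (c : R) : \sum_y (if e x y then c else 0) = c * (deg e x)%:R.
Proof.
rewrite deg_sum mulr_sumr; apply: eq_bigr => y _; case: (e x y).
  by rewrite mulr1. by rewrite mulr0.
Qed.

Lemma trans_ge0 g x y : 0 <= g <= 1 -> 0 <= trans e g x y.
Proof.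
move=> /andP[g0 g1]; rewrite /trans; case: (x == y) => //; case: (e x y) => //.
by rewrite divr_ge0 // subr_ge0.
Qed.

Lemma trans_sum1 g x : \sum_y trans e g x y = 1.
Proof.
have -> : \sum_y trans e g x y =
   \sum_y ((if x == y then g else 0) + (if e x y then (1 - g) / (deg e x)%:R else 0)).
  apply: eq_bigr => y _; rewrite /trans; case: eqP => [<-|]; last by rewrite add0r.
  by rewrite eirr addr0.
rewrite big_split /= sum_edge divfK ?deg_neq0 //.
rewrite -big_mkcond /= (big_pred1 x) => [|y]; last by rewrite /= eq_sym.
by rewrite addrC subrK.
Qed.

Definition isdist (m : T -> R) := (forall x, 0 <= m x) /\ \sum_x m x = 1.

Lemma step_ge0 g s : 0 <= g <= 1 -> (forall x, 0 <= s x) -> forall y, 0 <= step g s y.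
Proof.
move=> hg hs y; apply: sumr_ge0 => x _; apply: mulr_ge0 => //; exact: trans_ge0.
Qed.

Lemma step_sum g s : \sum_y step g s y = \sum_x s x.
Proof.
rewrite /step exchange_big /=; apply: eq_bigr => x _.
by rewrite -mulr_sumr trans_sum1 mulr1.
Qed.

Lemma step_dist g s : 0 <= g <= 1 -> isdist s -> isdist (step g s).
Proof. by move=> hg [h1 h2]; split; [exact: step_ge0|rewrite step_sum]. Qed.

Lemma delta_dist w : isdist (delta w).
Proof.
split; first by move=> x; rewrite /delta; case: eqP.
by rewrite /delta -big_mkcond /= big_pred1_eq.
Qed.

Lemma walk_stepn g w k : walk_dist e g w k = stepn g k (delta w).
Proof. by elim: k => //= k ->. Qed.

Lemma walk_dist_dist g w k : 0 <= g <= 1 -> isdist (walk_dist e g w k).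
Proof.
move=> hg; rewrite walk_stepn; elim: k => [|k IH] /=; first exact: delta_dist.
exact: step_dist.
Qed.

Lemma step_lin g a b : step g (fun y => a y - b y) = (fun y => step g a y - step g b y).
Proof.
apply: boolp.funext => y; rewrite /step -sumrB; apply: eq_bigr => x _.
by rewrite mulrBl.
Qed.

Lemma stepn_lin g k a b :
  stepn g k (fun y => a y - b y) = (fun y => stepn g k a y - stepn g k b y).
Proof. by elim: k => //= k ->; rewrite step_lin. Qed.

Lemma stepn_kernel g k s y : stepn g k s y = \sum_x s x * walk_dist e g x k y.
Proof.
elim: k y => [|k IH] y.
  rewrite /= (bigD1 y) //= eqxx mulr1 big1 ?addr0 // => x xy.
  by rewrite eq_sym (negbTE xy) mulr0.
change (step g (stepn g k s) y = \sum_x s x * walk_dist e g x k.+1 y).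
rewrite /step.
under eq_bigr => z _ do rewrite IH mulr_suml.
rewrite exchange_big /=; apply: eq_bigr => x _.
by rewrite mulr_sumr; apply: eq_bigr => z _; rewrite mulrA.
Qed.

Lemma l1_step g s : 0 <= g <= 1 -> l1 (step g s) <= l1 s.
Proof.
move=> hg; rewrite /l1 /step.
apply: (le_trans (y := \sum_y \sum_x `|s x| * trans e g x y)).
  apply: ler_sum => y _; apply: (le_trans (ler_norm_sum _ _ _)).
  apply: ler_sum => x _; rewrite normrM (ger0_norm (trans_ge0 _ _ hg)) //.
rewrite exchange_big /=; apply: ler_sum => x _.
by rewrite -mulr_sumr trans_sum1 mulr1.
Qed.

Lemma l1_stepn g k s : 0 <= g <= 1 -> l1 (stepn g k s) <= l1 s.
Proof.
move=> hg; elim: k => //= k IH; exact: le_trans (l1_step _ hg) IH.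
Qed.

Lemma l1_ge0 s : 0 <= l1 s.
Proof. by apply: sumr_ge0 => x _. Qed.

Lemma walk_pos g n x y : 0 <= g < 1 -> walkn e n x y -> 0 < walk_dist e g x n y.
Proof.
move=> /andP[g0 g1]; have hg : 0 <= g <= 1 by rewrite g0 ltW.
elim: n y => [|n IH] y; first by move=> /= /eqP ->; rewrite eqxx.
rewrite walknS_last => /existsP[z /andP[wz zy]].
rewrite /= (bigD1 z) //=; apply: ltr_pwDl; last first.
  apply: sumr_ge0 => t _; apply: mulr_ge0; last exact: trans_ge0.
  by case: (walk_dist_dist x n hg) => + _; apply.
apply: mulr_gt0; first exact: IH.
rewrite /trans; case: eqP => [zy'|_]; first by rewrite zy' eirr in zy.
by rewrite zy divr_gt0 // ?subr_gt0 // ltr0n deg_gt0.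
Qed.

Lemma walk_pos_lazy g n x y : 0 < g <= 1 -> 0 < walk_dist e g x n y ->
  0 < walk_dist e g x n.+1 y.
Proof.
move=> /andP[g0 g1] h; have hg : 0 <= g <= 1 by rewrite ltW.
rewrite /= (bigD1 y) //=; apply: ltr_pwDl; last first.
  apply: sumr_ge0 => t _; apply: mulr_ge0; last exact: trans_ge0.
  by case: (walk_dist_dist x n hg) => + _; apply.
by rewrite /trans eqxx mulr_gt0.
Qed.

Lemma walk_dist1 w k : walk_dist e 1 w k = delta w.
Proof.
elim: k => //= k ->; apply: boolp.funext => y.
rewrite (bigD1 y) //= /trans eqxx mulr1 big1 ?addr0 // => x xy.
rewrite (negbTE xy) /delta; case: eqP => [->|]; last by rewrite mul0r.
by rewrite subrr mul0r; case: (e _ _); rewrite mulr0.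
Qed.

End Prob.

Section Conv.
Variables (R : realType) (T : finType) (e : rel T).
Hypothesis esym : symmetric e.
Hypothesis eirr : irreflexive e.
Hypothesis econn : connected_graph e.
Hypothesis hT : (1 < #|T|)%N.
Implicit Types (g : R) (s : T -> R).

Lemma trans_split g x y : trans e g x y =
  (if x == y then g else 0) + (if e x y then (1 - g) / (deg e x)%:R else 0).
Proof.
rewrite /trans; case: eqP => [<-|]; last by rewrite add0r.
by rewrite eirr addr0.
Qed.

Definition Dt : R := \sum_x (deg e x)%:R.

Lemma Dt_gt0 : 0 < Dt.
Proof.
have [r _] := some_vertex hT.
rewrite /Dt (bigD1 r) //= ltr_pwDl ?ltr0n ?deg_gt0 //.
by apply: sumr_ge0 => x _; rewrite ler0n.
Qed.

Definition pist : T -> R := fun x => (deg e x)%:R / Dt.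

Lemma pi_dist : isdist pist.
Proof.
split; first by move=> x; rewrite /pist divr_ge0 ?ler0n // ltW // Dt_gt0.
by rewrite /pist -mulr_suml divff // gt_eqF // Dt_gt0.
Qed.

Lemma sum_pred1_eqr (F : T -> R) y : \sum_x (if x == y then F x else 0) = F y.
Proof.
rewrite (bigD1 y) //= eqxx big1 ?addr0 // => x /negbTE -> //.
Qed.

Lemma step_pi g : step e g pist = pist.
Proof.
apply: boolp.funext => y; rewrite /step.
under eq_bigr => x _ do rewrite trans_split mulrDr.
rewrite big_split /=.
have -> : \sum_x pist x * (if x == y then g else 0) = pist y * g.
  rewrite -(sum_pred1_eqr (fun x => pist x * g) y); apply: eq_bigr => x _.
  by case: eqP => _; rewrite ?mulr0.
have -> : \sum_x pist x * (if e x y then (1 - g) / (deg e x)%:R else 0) =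
          \sum_x (if e y x then (1 - g) / Dt else 0).
  apply: eq_bigr => x _; rewrite esym; case: (e y x); last by rewrite mulr0.
  rewrite /pist; field.
  by rewrite deg_neq0 // gt_eqF // Dt_gt0.
rewrite sum_edge // /pist; field.
by rewrite gt_eqF // Dt_gt0.
Qed.

Lemma stepn_pi g k : stepn e g k pist = pist.
Proof. by elim: k => //= k ->; rewrite step_pi. Qed.

Variable c : T -> bool.
Hypothesis hc : forall x y, e x y -> c x != c y.

Lemma col_edge x y b : e x y -> (c x == b) = (c y == ~~ b).
Proof.
move=> /hc; case: (c x); case: (c y); case: b => //.
Qed.

Lemma half_deg b :
  \sum_x (if c x == b then (deg e x)%:R else 0) =
  \sum_x (if c x == ~~ b then (deg e x)%:R else 0) :> R.
Proof.
have E : forall b', \sum_x (if c x == b' then (deg e x)%:R else 0) =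
   \sum_x \sum_y (if c x == b' then (if e x y then 1 else 0) else 0) :> R.
  move=> b'; apply: eq_bigr => x _; case: (c x == b'); last by rewrite big1.
  by rewrite deg_sum.
rewrite !E exchange_big /=; apply: eq_bigr => y _; apply: eq_bigr => x _.
rewrite (esym y x); case exy: (e x y); first by rewrite (col_edge b exy).
by case: ifP; case: ifP.
Qed.

Lemma half_deg2 b :
  \sum_x (if c x == b then (deg e x)%:R else 0) = Dt / 2 :> R.
Proof.
have H : Dt = \sum_x (if c x == b then (deg e x)%:R else 0) +
              \sum_x (if c x == ~~ b then (deg e x)%:R else 0) :> R.
  rewrite /Dt -big_split /=; apply: eq_bigr => x _.
  by case: (c x); case: b => /=; rewrite ?add0r ?addr0.
by rewrite H -half_deg; field.
Qed.

Definition sig (b : bool) : T -> R :=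
  fun x => if c x == b then 2 * (deg e x)%:R / Dt else 0.

Lemma sig_dist b : isdist (sig b).
Proof.
split.
  move=> x; rewrite /sig; case: ifP => // _.
  by rewrite divr_ge0 ?mulr_ge0 ?ler0n // ltW // Dt_gt0.
have -> : \sum_x sig b x = 2 / Dt * \sum_x (if c x == b then (deg e x)%:R else 0).
  rewrite mulr_sumr; apply: eq_bigr => x _; rewrite /sig.
  case: ifP => _; last by rewrite mulr0.
  by rewrite mulrAC.
rewrite half_deg2; field; by rewrite gt_eqF // Dt_gt0.
Qed.

Lemma step_sig b : step e 0 (sig b) = sig (~~ b).
Proof.
apply: boolp.funext => y; rewrite /step.
have -> : \sum_x sig b x * trans e 0 x y =
          \sum_x (if e y x then (if c y == ~~ b then 2 / Dt else 0) else 0).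
  apply: eq_bigr => x _; rewrite trans_split subr0.
  have -> : (if x == y then (0:R) else 0) = 0 by case: ifP.
  rewrite add0r esym; case exy: (e y x); last by rewrite mulr0.
  rewrite esym in exy; rewrite /sig (col_edge b exy).
  case: ifP => _; last by rewrite mul0r.
  field; by rewrite deg_neq0 // gt_eqF // Dt_gt0.
rewrite sum_edge // /sig; case: ifP => _; last by rewrite mul0r.
by rewrite mulrAC.
Qed.

Lemma stepn_sig b k : stepn e 0 k (sig b) = sig (b (+) odd k).
Proof.
elim: k => [|k IH] /=; first by rewrite addbF.
rewrite IH step_sig; congr sig; by rewrite addbN.
Qed.

Lemma walk0_zero w k y : c y != c w (+) odd k -> walk_dist e (0:R) w k y = 0.
Proof.
elim: k y => [|k IH] y /=.
  rewrite addbF; case: (eqVneq y w) => [->|yw]; first by rewrite eqxx.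
  by rewrite ?(negbTE yw).
move=> hy; apply: big1 => x _.
case: (eqVneq (c x) (c w (+) odd k)) => hx; last by rewrite IH // mul0r.
rewrite /trans; case: eqP => _; first by rewrite mulr0.
case exy: (e x y); last by rewrite mulr0.
exfalso; move: (hc exy) hy; rewrite hx.
by case: (c y); case: (c w); case: (odd k).
Qed.

End Conv.

Section Doeblin.
Variables (R : realType) (T : finType).

Lemma doeblin (K : T -> T -> R) (c : T -> bool) (eps : R) (s : T -> R) :
  (forall x y, 0 <= K x y) -> (forall x, \sum_y K x y = 1) -> 0 <= eps ->
  (forall x y, c x = c y -> eps <= K x y) ->
  (forall x y, c x != c y -> K x y = 0) ->
  (forall b, \sum_x (if c x == b then s x else 0) = 0) ->
  l1 (fun y => \sum_x s x * K x y) <= (1 - eps) * l1 s /\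
  (forall b, \sum_y (if c y == b then \sum_x s x * K x y else 0) = 0).
Proof.
move=> K0 K1 e0 Ke Kz hs; split.
  have E : forall y, \sum_x s x * K x y =
      \sum_x (if c x == c y then s x * (K x y - eps) else 0).
    move=> y.
    have -> : \sum_x (if c x == c y then s x * (K x y - eps) else 0) =
      \sum_x (if c x == c y then s x * K x y else 0) -
      eps * \sum_x (if c x == c y then s x else 0).
      rewrite mulr_sumr -sumrB; apply: eq_bigr => x _.
      case: ifP => _; first ring.
      by rewrite mulr0 subr0.
    rewrite hs mulr0 subr0; apply: eq_bigr => x _.
    by case: eqP => // /eqP h; rewrite Kz ?mulr0.
  rewrite /l1.
  apply: (le_trans (y := \sum_y \sum_x (if c x == c y then `|s x| * (K x y - eps) else 0))).
    apply: ler_sum => y _; rewrite E; apply: (le_trans (ler_norm_sum _ _ _)).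
    apply: ler_sum => x _; case: eqP => h; last by rewrite normr0.
    by rewrite normrM [`|K x y - eps|]ger0_norm // subr_ge0; exact: Ke.
  rewrite exchange_big /= mulr_sumr; apply: ler_sum => x _.
  have -> : \sum_y (if c x == c y then `|s x| * (K x y - eps) else 0) =
            `|s x| * \sum_y (if c x == c y then K x y - eps else 0).
    by rewrite mulr_sumr; apply: eq_bigr => y _; case: ifP; rewrite ?mulr0.
  rewrite mulrC; apply: ler_wpM2r => //.
  have S := K1 x; rewrite (bigD1 x) //= in S.
  rewrite (bigD1 x) //= eqxx -S.
  have : \sum_(y | y != x) (if c x == c y then K x y - eps else 0) <=
         \sum_(y | y != x) K x y.
    apply: ler_sum => y _; case: ifP => _ //; by rewrite lerBlDr lerDl.
  lra.
move=> b.
have -> : \sum_y (if c y == b then \sum_x s x * K x y else 0) =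
          \sum_x s x * \sum_y (if c y == b then K x y else 0).
  have -> : \sum_y (if c y == b then \sum_x s x * K x y else 0) =
     \sum_y \sum_x (if c y == b then s x * K x y else 0).
    by apply: eq_bigr => y _; case: ifP => _ //; rewrite big1.
  rewrite exchange_big /=; apply: eq_bigr => x _; rewrite mulr_sumr.
  by apply: eq_bigr => y _; case: ifP; rewrite ?mulr0.
transitivity (\sum_x (if c x == b then s x else 0)); last exact: hs.
apply: eq_bigr => x _.
case: (eqVneq (c x) b) => hx.
  rewrite ?hx ?eqxx /= -[RHS]mulr1 -(K1 x); congr (_ * _); apply: eq_bigr => y _.
  case: (eqVneq (c y) b) => hy //; rewrite Kz //; by rewrite hx eq_sym.
rewrite ?(negbTE hx) big1 ?mulr0 // => y _; case: (eqVneq (c y) b) => hy //.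
by rewrite Kz // hy.
Qed.

End Doeblin.

Section ConvMain.
Variables (R : realType) (T : finType) (e : rel T).
Hypothesis esym : symmetric e.
Hypothesis eirr : irreflexive e.
Hypothesis econn : connected_graph e.
Hypothesis hT : (1 < #|T|)%N.
Implicit Types (g : R) (s : T -> R).

Definition classzero (c : T -> bool) s :=
  forall b, \sum_x (if c x == b then s x else 0) = 0.

Lemma conv_doeblin g N eps c s : 0 <= g <= 1 -> (0 < N)%N -> 0 < eps -> eps <= 1 ->
  (forall x y, c x = c y -> eps <= walk_dist e g x N y) ->
  (forall x y, c x != c y -> walk_dist e g x N y = 0) ->
  classzero c s ->
  forall d, 0 < d -> exists K0, forall k, (K0 <= k)%N -> l1 (stepn e g k s) < d.
Proof.
move=> hg N0 e0 e1 Ke Kz hs d d0.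
have H : forall j, l1 (stepn e g (j * N) s) <= (1 - eps) ^+ j * l1 s /\
                   classzero c (stepn e g (j * N) s).
  elim=> [|j [IH1 IH2]]; first by rewrite mul0n expr0 mul1r.
  have -> : stepn e g (j.+1 * N) s =
            (fun y => \sum_x stepn e g (j * N) s x * walk_dist e g x N y).
    apply: boolp.funext => y; rewrite mulSn /stepn iterD.
    exact: stepn_kernel.
  have [D1 D2] := doeblin (c := c) (fun x => (walk_dist_dist eirr econn hT x N hg).1)
     (fun x => (walk_dist_dist eirr econn hT x N hg).2) (ltW e0) Ke Kz IH2.
  split => //; apply: (le_trans D1).
  by rewrite exprS -mulrA ler_wpM2l // subr_ge0.
have hq : 0 <= 1 - eps < 1 by rewrite subr_ge0 e1 /= ltrBlDr ltrDl.
have [J HJ] := geom_small (l1 s) hq d0.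
exists (J * N)%N => k hk.
have -> : stepn e g k s = stepn e g (k - J * N) (stepn e g (J * N) s).
  by rewrite /stepn -iterD subnK.
apply: (le_lt_trans (l1_stepn eirr econn hT _ _ hg)).
exact: (le_lt_trans (H J).1 HJ).
Qed.

End ConvMain.

Section ConvSpec.
Variables (R : realType) (T : finType) (e : rel T).
Hypothesis esym : symmetric e.
Hypothesis eirr : irreflexive e.
Hypothesis econn : connected_graph e.
Hypothesis hT : (1 < #|T|)%N.
Implicit Types (g : R) (s : T -> R).

Lemma min_pos (f : T -> T -> R) : (forall x y, 0 < f x y) ->
  exists eps, [/\ 0 < eps, eps <= 1 & forall x y, eps <= f x y].
Proof.
move=> hf.
set m := \big[Order.min/1]_(p : T * T) f p.1 p.2.
have m0 : 0 < m by apply: (big_ind (fun z => 0 < z)) => // a b a0 b0; rewrite lt_min a0.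
exists (Order.min m 1); split.
- by rewrite lt_min m0 ltr01.
- by rewrite ge_min lexx orbT.
move=> x y; rewrite ge_min; apply/orP; left.
by rewrite /m (bigD1 (x, y)) //= ge_min lexx.
Qed.

Definition conv_to (f : nat -> T -> R) (h : nat -> T -> R) :=
  forall d, 0 < d -> exists K0, forall k, (K0 <= k)%N -> l1 (fun y => f k y - h k y) < d.

Lemma conv_aperiodic g w : 0 <= g < 1 -> (0 < g \/ ~ bipartite e) ->
  conv_to (walk_dist e g w) (fun _ => pist R e).
Proof.
move=> /andP[g0 g1] hap; have hg : 0 <= g <= 1 by rewrite g0 ltW.
have [N [N0 HN]] : exists N, (0 < N)%N /\ forall x y, 0 < walk_dist e g x N y.
  case: hap => [gp|nb].
    have [N HN] := walk_bounded esym econn hT.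
    exists N.+1; split => // x y.
    have [n [nN wn]] := HN x y.
    have := walk_pos eirr econn hT (g := g) (n := n) (x := x) (y := y).
    rewrite g0 g1 => /(_ isT wn).
    have -> : N.+1 = (n + (N.+1 - n))%N by rewrite subnKC // leqW.
    elim: (N.+1 - n)%N => [|m IH]; first by rewrite addn0.
    move=> /IH; rewrite addnS; apply: walk_pos_lazy eirr econn hT _ _ _ _ _.
    by rewrite gp ltW.
  have [N [N0 HN]] := nonbip_allN esym econn hT nb.
  exists N; split => // x y.
  by apply: (walk_pos eirr econn hT (g := g) _ (HN x y)); rewrite g0 g1.
have [eps [e0 e1 He]] := min_pos HN.
move=> d d0.
have := conv_doeblin eirr econn hT (c := fun _ => true) (s := fun y => delta R w y - pist R e y)
   hg N0 e0 e1 (fun x y _ => He x y) _ _ d0.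
case.
- by move=> x y; rewrite eqxx.
- move=> b; case: b; last by rewrite big1.
  rewrite big_mkcond /= sumrB (delta_dist R w).2 (pi_dist R econn hT).2; by rewrite subrr.
move=> K0 HK; exists K0 => k /HK.
by rewrite stepn_lin walk_stepn (stepn_pi esym eirr econn hT).
Qed.

Variable c : T -> bool.
Hypothesis hc : forall x y, e x y -> c x != c y.

Lemma conv_bip w :
  conv_to (walk_dist e 0 w) (fun k => sig R e c (c w (+) odd k)).
Proof.
have [N [Nev [N0 HN]]] := bip_allN esym econn hT hc.
have hg : (0 <= (0:R)) && ((0:R) <= 1) by rewrite lexx ler01.
have Hpos : forall x y, 0 < (if c x == c y then walk_dist e (0:R) x N y else 1).
  move=> x y; case: (eqVneq (c x) (c y)) => [h|_] /=; last exact: ltr01.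
  by apply: (walk_pos eirr econn hT (g := (0:R)) _ (HN _ _ h)); rewrite lexx ltr01.
have [eps [e0 e1 He]] := min_pos Hpos.
move=> d d0.
have := conv_doeblin eirr econn hT (c := c) (s := fun y => delta R w y - sig R e c (c w) y)
   hg N0 e0 e1 _ _ _ d0.
case.
- by move=> x y h; have := He x y; rewrite h eqxx.
- move=> x y h; apply: (walk0_zero R hc); rewrite (negbTE Nev) addbF eq_sym //.
- move=> b; case: (eqVneq b (c w)) => [->|bw].
    rewrite big_mkcond /=.
    have -> : \sum_x (if c x == c w then delta R w x - sig R e c (c w) x else 0) =
              \sum_x (delta R w x - sig R e c (c w) x).
      apply: eq_bigr => x _; case: eqP => // /eqP h.
      rewrite /delta /sig (negbTE h); case: eqP => [xw|]; last by rewrite subr0.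
      by rewrite xw eqxx in h.
    by rewrite sumrB (delta_dist R w).2 (sig_dist R esym econn hT hc _).2 subrr.
  rewrite big1 // => x _; case: eqP => // hx.
  rewrite /delta /sig hx (negbTE bw).
  case: eqP => [xw|_]; last by rewrite subrr.
  by move: bw; rewrite -hx xw eqxx.
move=> K0 HK; exists K0 => k /HK.
by rewrite stepn_lin walk_stepn (stepn_sig R esym eirr econn hT hc).
Qed.

End ConvSpec.

Section Transport.
Variables (R : realType) (T : finType).
Implicit Types (mu nu : T -> R) (P Q : T -> T -> R).

Definition costC (C : T -> T -> R) P := \sum_x \sum_y C x y * P x y.

Lemma plan_T mu nu P : transport_plan mu nu P ->
  transport_plan nu mu (fun x y => P y x).
Proof. by case=> [h0 [h1 h2]]; split => //. Qed.

Lemma costC_T C P : costC C P = costC (fun x y => C y x) (fun x y => P y x).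
Proof. by rewrite /costC exchange_big. Qed.

Lemma plan_nu_sum mu nu P : transport_plan mu nu P -> \sum_y nu y = \sum_x mu x.
Proof.
case=> [_ [h1 h2]]; under eq_bigr => y _ do rewrite -h2.
by rewrite exchange_big; apply: eq_bigr => x _; rewrite h1.
Qed.

Lemma sum0_pos (F : T -> R) : (forall x, 0 <= F x) -> \sum_x F x = 0 -> forall x, F x = 0.
Proof. by move=> h0 hs x; apply: (psumr_eq0P (P := xpredT)) => // i _. Qed.

Lemma L_row C D mu mu' nu Q : (forall x y, 0 <= C x y <= D) -> 0 <= D ->
  isdist mu -> isdist mu' -> transport_plan mu' nu Q ->
  exists P, transport_plan mu nu P /\
    costC C P <= costC C Q + D * l1 (fun x => mu x - mu' x).
Proof.
move=> hC D0 [m0 m1] [m0' m1'] [Q0 [Q1 Q2]].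
set m := fun x => Order.min (mu x) (mu' x).
set r := fun x => if mu' x == 0 then 0 else m x / mu' x.
set a := fun x => mu x - m x.
set nu1 := fun y => \sum_x r x * Q x y.
set b := fun y => nu y - nu1 y.
set S := \sum_x a x.
have mge0 x : 0 <= m x by rewrite /m le_min m0 m0'.
have r01 x : 0 <= r x <= 1.
  rewrite /r; case: eqP => [_|h]; first by rewrite lexx ler01.
  have p : 0 < mu' x by rewrite lt_neqAle eq_sym m0' andbT; apply/eqP.
  by rewrite divr_ge0 ?(ltW p) //= ler_pdivrMr // mul1r /m ge_min lexx orbT.
have rowQ1 x : \sum_y r x * Q x y = m x.
  rewrite -mulr_sumr Q1 /r; case: eqP => [h|h]; last by rewrite mulfVK //; apply/eqP.
  rewrite mul0r; apply/eqP; rewrite eq_le mge0 /= /m h ge_min.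
  by rewrite lexx orbT.
have a0 x : 0 <= a x by rewrite /a subr_ge0 /m ge_min lexx.
have b0 y : 0 <= b y.
  rewrite /b /nu1 -Q2 subr_ge0; apply: ler_sum => x _.
  rewrite -[X in _ <= X]mul1r; apply: ler_wpM2r => //; by case/andP: (r01 x).
have sumb : \sum_y b y = S.
  rewrite /b sumrB /S /a sumrB (plan_nu_sum (conj Q0 (conj Q1 Q2))) m1 m1'.
  congr (_ - _); rewrite /nu1 exchange_big; apply: eq_bigr => x _; exact: rowQ1.
have S0 : 0 <= S by apply: sumr_ge0.
exists (fun x y => r x * Q x y + a x * b y / S); split; first split.
- move=> x y; apply: addr_ge0; first by apply: mulr_ge0 => //; case/andP: (r01 x).
  by apply: divr_ge0 => //; apply: mulr_ge0.
- split.
  + move=> x; rewrite big_split /= rowQ1.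
    have -> : \sum_y a x * b y / S = a x * (\sum_y b y) / S.
      by rewrite mulr_sumr mulr_suml.
    rewrite sumb; case: (eqVneq S 0) => hS.
      have ax : a x = 0 := sum0_pos a0 hS x.
      rewrite ax !mul0r addr0; move: ax; rewrite /a => /eqP.
      by rewrite subr_eq0 => /eqP ->.
    by rewrite mulfK // /a addrC subrK.
  + move=> y; rewrite big_split /=.
    have -> : \sum_x a x * b y / S = (\sum_x a x) * b y / S.
      by rewrite mulr_suml mulr_suml.
    rewrite -/S -/(nu1 y); case: (eqVneq S 0) => hS.
      have sb0 : \sum_y b y = 0 by rewrite sumb.
      have by0 : b y = 0 := sum0_pos b0 sb0 y.
      rewrite by0 mulr0 mul0r addr0; move: by0; rewrite /b => /eqP.
      by rewrite subr_eq0 => /eqP ->.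
    by rewrite mulrAC divff // mul1r /b addrC subrK.
rewrite /costC.
rewrite (eq_bigr (fun x => \sum_y C x y * (r x * Q x y) + \sum_y C x y * (a x * b y / S)));
  last by move=> x _; rewrite -big_split; apply: eq_bigr => y _; rewrite mulrDr.
rewrite big_split /=; apply: lerD.
  apply: ler_sum => x _; apply: ler_sum => y _; apply: ler_wpM2l.
    by case/andP: (hC x y).
  by rewrite ler_piMl //; case/andP: (r01 x).
apply: (le_trans (y := \sum_x \sum_y D * (a x * b y / S))).
  apply: ler_sum => x _; apply: ler_sum => y _; apply: ler_wpM2r.
    by apply: divr_ge0 => //; apply: mulr_ge0.
  by case/andP: (hC x y).
have aleq x : a x <= `|mu x - mu' x|.
  rewrite /a /m /=; case: (leP (mu x) (mu' x)) => h.
    by rewrite subrr.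
  by rewrite ler_norm.
case: (eqVneq S 0) => hS.
  rewrite big1; first by rewrite mulr_ge0 // l1_ge0.
  move=> x _; rewrite big1 // => y _.
  by rewrite (sum0_pos a0 hS x) !mul0r mulr0.
have -> : \sum_x \sum_y D * (a x * b y / S) = \sum_x D * a x.
  apply: eq_bigr => x _.
  transitivity (D * a x * (\sum_y b y) / S).
    rewrite mulr_sumr mulr_suml; apply: eq_bigr => y _; ring.
  by rewrite sumb mulfK.
rewrite -mulr_sumr ler_wpM2l // /l1; apply: ler_sum => x _; exact: aleq.
Qed.

End Transport.

Section Transport2.
Variables (R : realType) (T : finType).
Implicit Types (mu nu : T -> R) (P Q : T -> T -> R).

Lemma L_col C D mu nu nu' Q : (forall x y, 0 <= C x y <= D) -> 0 <= D ->
  isdist nu -> isdist nu' -> transport_plan mu nu' Q ->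
  exists P, transport_plan mu nu P /\
    costC C P <= costC C Q + D * l1 (fun x => nu x - nu' x).
Proof.
move=> hC D0 dn dn' hQ.
have [P' [hP' hc']] := L_row (C := fun x y => C y x) (fun x y => hC y x) D0 dn dn' (plan_T hQ).
exists (fun x y => P' y x); split; first exact: plan_T.
by rewrite costC_T (costC_T C Q).
Qed.

Lemma L_both C D mu mu' nu nu' Q : (forall x y, 0 <= C x y <= D) -> 0 <= D ->
  isdist mu -> isdist mu' -> isdist nu -> isdist nu' -> transport_plan mu' nu' Q ->
  exists P, transport_plan mu nu P /\
    costC C P <= costC C Q + D * (l1 (fun x => mu x - mu' x) + l1 (fun x => nu x - nu' x)).
Proof.
move=> hC D0 dm dm' dn dn' hQ.
have [Q2 [hQ2 c2]] := L_col hC D0 dn dn' hQ.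
have [P [hP c3]] := L_row hC D0 dm dm' hQ2.
exists P; split => //; rewrite mulrDr; lra.
Qed.

Lemma prod_plan mu nu : isdist mu -> isdist nu ->
  transport_plan mu nu (fun x y => mu x * nu y).
Proof.
move=> [m0 m1] [n0 n1]; split; first by move=> x y; rewrite mulr_ge0.
split => [x|y]; first by rewrite -mulr_sumr n1 mulr1.
by rewrite -mulr_suml m1 mul1r.
Qed.

Lemma l1_sym mu nu : l1 (fun x => mu x - nu x) = l1 (fun x => nu x - mu x).
Proof. by apply: eq_bigr => x _; rewrite distrC. Qed.

Lemma costC_ge0 C P : (forall x y, 0 <= C x y) -> (forall x y, 0 <= P x y) -> 0 <= costC C P.
Proof. by move=> h1 h2; do 2![apply: sumr_ge0 => ? _]; rewrite mulr_ge0. Qed.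

Variable e : rel T.
Hypothesis hT : (1 < #|T|)%N.

Definition Dg : R := (#|T|)%:R.
Definition gC : T -> T -> R := fun x y => (gdist e x y)%:R.

Lemma gdist_le x y : (gdist e x y <= #|T|)%N.
Proof.
rewrite /gdist; apply: (big_ind (fun n => n <= #|T|)%N) => [//|a b ha hb|i _].
  by rewrite geq_min ha.
exact: ltnW.
Qed.

Lemma gC_bound x y : 0 <= gC x y <= Dg.
Proof. by rewrite /gC /Dg ler0n ler_nat gdist_le. Qed.

Lemma Dg_ge0 : 0 <= Dg.
Proof. exact: ler0n. Qed.

Lemma plan_costE P : plan_cost e P = costC gC P.
Proof. by []. Qed.

Lemma wass_le mu nu P : transport_plan mu nu P -> wass e mu nu <= plan_cost e P.
Proof.
move=> hP; apply: ge_inf; last by exists P.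
exists 0 => c [Q [[hQ0 _] ->]]; rewrite plan_costE.
by apply: costC_ge0 => x y; [exact: ler0n | exact: hQ0].
Qed.

Lemma wass_ge mu nu L : isdist mu -> isdist nu ->
  (forall P, transport_plan mu nu P -> L <= plan_cost e P) -> L <= wass e mu nu.
Proof.
move=> dm dn H; apply: lb_le_inf.
  by exists (plan_cost e (fun x y => mu x * nu y)), (fun x y => mu x * nu y); split => //; exact: prod_plan.
by move=> c [P [hP ->]]; apply: H.
Qed.

Lemma wass_ge0 mu nu : isdist mu -> isdist nu -> 0 <= wass e mu nu.
Proof.
move=> dm dn; apply: wass_ge => // P [hP _]; rewrite plan_costE.
by apply: costC_ge0 => x y; [exact: ler0n | exact: hP].
Qed.

Lemma wass_cont1 mu mu' nu nu' : isdist mu -> isdist mu' -> isdist nu -> isdist nu' ->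
  wass e mu nu <= wass e mu' nu' +
     Dg * (l1 (fun x => mu x - mu' x) + l1 (fun x => nu x - nu' x)).
Proof.
move=> dm dm' dn dn'.
rewrite -lerBlDr.
apply: wass_ge => // Q hQ.
have [P [hP cP]] := L_both gC_bound Dg_ge0 dm dm' dn dn' hQ.
have := wass_le hP; rewrite !plan_costE; lra.
Qed.

Lemma wass_cont mu mu' nu nu' : isdist mu -> isdist mu' -> isdist nu -> isdist nu' ->
  `|wass e mu nu - wass e mu' nu'| <=
     Dg * (l1 (fun x => mu x - mu' x) + l1 (fun x => nu x - nu' x)).
Proof.
move=> dm dm' dn dn'; rewrite ler_norml.
have h1 := wass_cont1 dm dm' dn dn'.
have h2 := wass_cont1 dm' dm dn' dn.
rewrite -(l1_sym mu) -(l1_sym nu) in h2.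
apply/andP; split; lra.
Qed.

Lemma bigmin_le_cond (I : finType) (P : pred I) (F : I -> nat) (j : I) d :
  P j -> (\big[minn/d]_(i | P i) F i <= F j)%N.
Proof.
move=> Pj; rewrite unlock /reducebig.
have : j \in index_enum I by rewrite mem_index_enum.
elim: (index_enum I) => //= i s IH; rewrite inE => /orP[/eqP <-|/IH h].
  by rewrite /applybig /= Pj geq_min leqnn.
rewrite /applybig /=; case: (P i) => //; by rewrite geq_min h orbT.
Qed.

Lemma gdist_xx x : gdist e x x = 0%N.
Proof.
apply/eqP; rewrite -leqn0.
by apply: (@bigmin_le_cond _ _ (fun n : 'I_#|T| => nat_of_ord n) (Ordinal (ltnW hT)) #|T|) => /=.
Qed.

Lemma gdist_ge1 x y : x != y -> (1 <= gdist e x y)%N.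
Proof.
move=> xy; rewrite /gdist; apply: (big_ind (fun n => 1 <= n)%N) => //.
- exact: ltnW.
- by move=> a b ha hb; rewrite leq_min ha.
by move=> [[|n] hn] //= ; rewrite (negbTE xy).
Qed.

Lemma gdist_edge x y : e x y -> (gdist e x y <= 1)%N.
Proof.
move=> xy.
apply: (@bigmin_le_cond _ _ (fun n : 'I_#|T| => nat_of_ord n) (Ordinal hT) #|T|) => /=.
by apply/existsP; exists y; rewrite xy eqxx.
Qed.

Lemma wass_self mu : isdist mu -> wass e mu mu = 0.
Proof.
move=> dm; apply/eqP; rewrite eq_le wass_ge0 // andbT.
have hP : transport_plan mu mu (fun x y => if x == y then mu x else 0).
  case: dm => m0 m1; split; first by move=> x y; case: eqP.
  split => [x|y].
    by rewrite (bigD1 x) //= eqxx big1 ?addr0 // => y /negbTE; rewrite eq_sym => ->.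
  by rewrite (bigD1 y) //= eqxx big1 ?addr0 // => x /negbTE ->.
apply: le_trans (wass_le hP) _; rewrite /plan_cost big1 // => x _.
by rewrite big1 // => y _; case: eqP => [->|]; rewrite ?gdist_xx ?mul0r ?mulr0.
Qed.

End Transport2.

Section Values.
Variables (R : realType) (T : finType) (e : rel T).
Hypothesis esym : symmetric e.
Hypothesis eirr : irreflexive e.
Hypothesis econn : connected_graph e.
Hypothesis hT : (1 < #|T|)%N.
Variable c : T -> bool.
Hypothesis hc : forall x y, e x y -> c x != c y.
Implicit Types (mu nu : T -> R) (P : T -> T -> R).

Lemma supp_lb mu nu P b : (forall x, c x != b -> mu x = 0) ->
  transport_plan mu nu P ->
  \sum_y (if c y == b then 0 else nu y) <= plan_cost e P.
Proof.
move=> hmu [P0 [P1 P2]].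
apply: (le_trans (y := \sum_x \sum_y (if c y == b then 0 else P x y))).
  rewrite exchange_big /=; apply: ler_sum => y _; case: ifP => _.
    by rewrite big1.
  by rewrite P2.
apply: ler_sum => x _; apply: ler_sum => y _.
case: ifP => hy; first by rewrite mulr_ge0 ?ler0n.
case: (eqVneq (c x) b) => hx.
  have xy : x != y by apply/eqP => exy; rewrite -exy hx eqxx in hy.
  by rewrite ler_peMl // ler1n (gdist_ge1 e hT).
have : P x y = 0.
  apply: (sum0_pos (P0 x)); by rewrite P1 hmu.
by move=> ->; rewrite mulr0.
Qed.

Let Dt0 := Dt_gt0 R econn hT.
Let Dtn0 : Dt R e != 0 := lt0r_neq0 Dt0.

Lemma wass_sig_opp b : wass e (sig R e c b) (sig R e c (~~ b)) = 1.
Proof.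
have ds := sig_dist R esym econn hT hc.
apply/eqP; rewrite eq_le; apply/andP; split; last first.
  apply: wass_ge => // P hP.
  apply: le_trans (supp_lb (b := b) _ hP); last by move=> x hx; rewrite /sig (negbTE hx).
  rewrite -(ds (~~ b)).2 le_eqVlt; apply/orP; left; apply/eqP.
  apply: eq_bigr => y _; rewrite /sig; case: (c y); case: (b) => //=.
set P := fun x y => if (c x == b) && e x y then 2 / Dt R e else 0.
have P0 : forall x y, 0 <= P x y.
  by move=> x y; rewrite /P; case: ifP => // _; rewrite divr_ge0 // ltW.
have hP : transport_plan (sig R e c b) (sig R e c (~~ b)) P.
  split => //; split => [x|y].
    rewrite /P /sig; case: (c x == b) => /=; last by rewrite big1.
    by rewrite (sum_edge e) mulrAC.
  have -> : \sum_x P x y = \sum_x (if e y x then (if c y == ~~ b then 2 / Dt R e else 0) else 0).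
    apply: eq_bigr => x _; rewrite /P (esym y x); case exy: (e x y).
      by rewrite (col_edge hc b exy) andbT.
    by rewrite andbF.
  rewrite (sum_edge e) /sig; case: ifP => _; last by rewrite mul0r.
  by rewrite mulrAC.
apply: le_trans (wass_le e hP) _.
apply: (le_trans (y := \sum_x \sum_y P x y)).
  apply: ler_sum => x _; apply: ler_sum => y _.
  rewrite /P; case: ifP => [/andP[_ exy]|_]; last by rewrite mulr0.
  by rewrite ler_piMl ?divr_ge0 ?(ltW Dt0) // lern1 (gdist_edge hT).
case: hP => _ [P1 _]; by rewrite (eq_bigr _ (fun x _ => P1 x)) (ds b).2.
Qed.

Lemma wass_sig_pi b : wass e (sig R e c b) (pist R e) = 1 / 2.
Proof.
have ds := sig_dist R esym econn hT hc.
have dp := pi_dist R econn hT.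
have hd := half_deg2 R esym hc.
apply/eqP; rewrite eq_le; apply/andP; split; last first.
  apply: wass_ge => // P hP.
  apply: le_trans (supp_lb (b := b) _ hP); last by move=> x hx; rewrite /sig (negbTE hx).
  rewrite le_eqVlt; apply/orP; left; apply/eqP.
  transitivity ((\sum_y (if c y == ~~ b then (deg e y)%:R else 0)) / Dt R e).
    by rewrite hd; field.
  rewrite mulr_suml; apply: eq_bigr => y _; rewrite /pist.
  by case: (c y); case: (b) => /=; rewrite ?mul0r.
set P := fun x y => if c x == b then
   (if x == y then pist R e x else 0) + (if e x y then 1 / Dt R e else 0) else 0.
have P0 : forall x y, 0 <= P x y.
  move=> x y; rewrite /P; case: ifP => // _; apply: addr_ge0.
    by case: ifP => // _; case: dp => + _; apply.
  by case: ifP => // _; rewrite divr_ge0 // ltW.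
have hP : transport_plan (sig R e c b) (pist R e) P.
  split => //; split => [x|y].
    rewrite /P /sig; case: (c x == b) => /=; last by rewrite big1.
    rewrite big_split /= (sum_edge e).
    have -> : \sum_y (if x == y then pist R e x else 0) = pist R e x.
      by rewrite (bigD1 x) //= eqxx big1 ?addr0 // => y; rewrite eq_sym => /negbTE ->.
    rewrite /pist; field; exact: Dtn0.
  have -> : \sum_x P x y = (if c y == b then pist R e y else 0) +
      \sum_x (if e y x then (if c y == ~~ b then 1 / Dt R e else 0) else 0).
    rewrite -(sum_pred1_eqr (fun x => if c x == b then pist R e x else 0) y) -big_split /=.
    apply: eq_bigr => x _; rewrite /P (esym y x).
    case: (eqVneq x y) => [->|xy].
      by rewrite ?eirr ?eqxx !addr0.
    case exy: (e x y); last by case: ifP; rewrite ?addr0 ?add0r.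
    by rewrite (col_edge hc b exy); case: ifP; rewrite ?add0r.
  rewrite (sum_edge e).
  by case: (c y); case: (b) => /=; rewrite ?mul0r ?addr0 ?add0r //= /pist mul1r mulrC.
apply: le_trans (wass_le e hP) _.
apply: (le_trans (y := \sum_x (if c x == b then \sum_y (if e x y then 1 / Dt R e else 0) else 0))).
  apply: ler_sum => x _; rewrite /P; case: ifP => _; last first.
    by rewrite big1 // => y _; rewrite mulr0.
  apply: ler_sum => y _; case: (eqVneq x y) => [->|xy].
    by rewrite (gdist_xx e hT) eirr mul0r.
  rewrite add0r; case: ifP => exy; last by rewrite mulr0.
  by rewrite ler_piMl ?divr_ge0 ?(ltW Dt0) // lern1 (gdist_edge hT).
rewrite le_eqVlt; apply/orP; left; apply/eqP.
transitivity ((\sum_x (if c x == b then (deg e x)%:R else 0)) / Dt R e).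
  rewrite mulr_suml; apply: eq_bigr => x _; case: ifP => _; last by rewrite mul0r.
  by rewrite (sum_edge e) mulrC mulrA mulr1.
by rewrite hd; field.
Qed.

End Values.

Section Combine.
Variables (R : realType) (T : finType) (e : rel T).

Lemma combine (mu nu a b : nat -> T -> R) (W : R) :
  (forall k, isdist (mu k)) -> (forall k, isdist (nu k)) ->
  (forall k, isdist (a k)) -> (forall k, isdist (b k)) ->
  conv_to mu a -> conv_to nu b -> (forall k, wass e (a k) (b k) = W) ->
  (fun k => wass e (mu k) (nu k)) @ \oo --> W.
Proof.
move=> dmu dnu da db ca cb hW; apply: cvg_bridge => eps e0.
have D0 : 0 <= Dg R T by apply: ler0n.
set d := eps / (2 * (Dg R T + 1)).
have d0 : 0 < d by rewrite /d divr_gt0 // mulr_gt0 // ltr_pwDr.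
have [K1 H1] := ca d d0; have [K2 H2] := cb d d0.
exists (maxn K1 K2) => k hk.
have h1 := H1 k (leq_trans (leq_maxl _ _) hk).
have h2 := H2 k (leq_trans (leq_maxr _ _) hk).
rewrite -(hW k); apply: le_lt_trans (wass_cont e (dmu k) (da k) (dnu k) (db k)) _.
apply: (le_lt_trans (y := Dg R T * (2 * d))).
  by apply: ler_wpM2l => //; rewrite mulr2n mulrDl mul1r; apply: lerD; apply: ltW.
have -> : Dg R T * (2 * d) = eps * (Dg R T / (Dg R T + 1)).
  rewrite /d; field; by rewrite lt0r_neq0 // ltr_pwDr.
rewrite -[X in _ < X]mulr1 ltr_pM2l // ltr_pdivrMr ?ltr_pwDr // mul1r.
by rewrite ltrDl.
Qed.

Lemma conv_const (m : T -> R) : conv_to (fun _ => m) (fun _ => m).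
Proof.
move=> d d0; exists 0%N => k _; rewrite /l1 big1 // => x _.
by rewrite subrr normr0.
Qed.

End Combine.

Unset Implicit Arguments.
Theorem theorem3p9 (R : realType) (T : finType) (e : rel T) (u v : T)
    (alpha beta : R) :
  simple_graph e -> connected_graph e -> (1 < #|T|)%N ->
  0 <= alpha -> alpha <= beta -> beta <= 1 ->
  ~ (bipartite e /\ alpha = 0 /\ beta = 1) ->
  exists W : R,
    ((fun k : nat => wass e (walk_dist e alpha u k) (walk_dist e beta v k))
       @ \oo --> W) /\
    ((0 < alpha /\ beta < 1) \/ (alpha = 1 /\ beta = 1 /\ u = v) \/
     (~ bipartite e /\ alpha = 0 /\ beta < 1) \/
     (alpha = 0 /\ beta = 0 /\ exists n, walkn e (2 * n) u v) -> W = 0) /\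
    (alpha = 0 /\ beta = 0 /\ W <> 0 -> W = 1) /\
    (alpha = 0 /\ 0 < beta /\ beta < 1 /\ bipartite e -> W = 1 / 2).
Proof.
move=> [esym eirr] econn hT a0 ab b1 nbip.
have dw : forall g w k, 0 <= g <= 1 -> isdist (walk_dist e g w k).
  by move=> g w k hg; apply: walk_dist_dist.
have dpi := pi_dist R econn hT.
have hb : 0 <= beta <= 1 by rewrite (le_trans a0 ab) b1.
have ha : 0 <= alpha <= 1 by rewrite a0 (le_trans ab b1).
have ev2 : forall n : nat, odd (2 * n)%R = false.
  by move=> n; rewrite /GRing.mul /= oddM (_ : (2%R : nat) = 2%N).
case: (eqVneq alpha 1) => [a1|a1].
  have b1' : beta = 1 by apply/eqP; rewrite eq_le b1 -a1 ab.
  exists (wass e (delta R u) (delta R v)); split.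
    rewrite a1 b1'.
    apply: (combine (a := fun _ => delta R u) (b := fun _ => delta R v)) => //.
    - by move=> k; apply: dw; rewrite lexx ler01.
    - by move=> k; apply: dw; rewrite ler01 lexx.
    - by move=> k; apply: delta_dist.
    - by move=> k; apply: delta_dist.
    - by rewrite (boolp.funext (walk_dist1 R e u)); apply: conv_const.
    - by rewrite (boolp.funext (walk_dist1 R e v)); apply: conv_const.
  split; last split.
  - case=> [[_ b]|[[_ [_ uv]]|[[_ [a _]]|[a _]]]].
    + by move: b; rewrite b1' ltxx.
    + by rewrite uv wass_self //; apply: delta_dist.
    + by move: a; rewrite a1 => /eqP; rewrite oner_eq0.
    + by move: a; rewrite a1 => /eqP; rewrite oner_eq0.
  - by case=> a; move: a; rewrite a1 => /eqP; rewrite oner_eq0.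
  - by case=> a; move: a; rewrite a1 => /eqP; rewrite oner_eq0.
have alt1 : alpha < 1 by rewrite lt_neqAle a1 (le_trans ab b1).
case: (eqVneq alpha 0) => [a00|an0].
-
  case: (eqVneq beta 1) => [b11|bn1].
    have nb : ~ bipartite e by move=> hbip; apply: nbip.
    exists (wass e (pist R e) (delta R v)); split.
      apply: (combine (a := fun _ => pist R e) (b := fun _ => delta R v)) => //.
      - by move=> k; apply: dw.
      - by move=> k; apply: dw.
      - by move=> k; apply: delta_dist.
      - apply: conv_aperiodic => //; first by rewrite a0 alt1.
        by right.
      - by rewrite b11 (boolp.funext (walk_dist1 R e v)); apply: conv_const.
    split; last split.
    + case=> [[a _]|[[a _]|[[_ [_ b]]|[_ [b _]]]]].
      * by move: a; rewrite a00 ltxx.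
      * by move: a1; rewrite a eqxx.
      * by move: b; rewrite b11 ltxx.
      * by move: b; rewrite b11 => /eqP; rewrite oner_eq0.
    + by case=> _ [b _]; move: b; rewrite b11 => /eqP; rewrite oner_eq0.
    + by case=> _ [_ [b _]]; move: b; rewrite b11 ltxx.
  have blt1 : beta < 1 by rewrite lt_neqAle bn1 b1.
  case: (pselect (bipartite e)) => [hbip|nb].
    have [c hc] := hbip.
    case: (eqVneq beta 0) => [b00|bn0].
      case: (eqVneq (c u) (c v)) => [cuv|cuv].
        exists 0; split.
          rewrite a00 b00.
          apply: (combine (a := fun k => sig R e c (c u (+) odd k))
                          (b := fun k => sig R e c (c v (+) odd k))).
          - by move=> k; apply: dw; rewrite lexx ler01.
          - by move=> k; apply: dw; rewrite lexx ler01.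
          - by move=> k; apply: sig_dist.
          - by move=> k; apply: sig_dist.
          - exact: conv_bip.
          - exact: conv_bip.
          - by move=> k; rewrite cuv wass_self //; apply: sig_dist.
        split => //; split.
          by case=> _ [_ h]; exfalso; apply: h.
        by case=> _ [b _]; move: b; rewrite b00 ltxx.
      exists 1; split.
        rewrite a00 b00.
        apply: (combine (a := fun k => sig R e c (c u (+) odd k))
                        (b := fun k => sig R e c (c v (+) odd k))).
        - by move=> k; apply: dw; rewrite lexx ler01.
        - by move=> k; apply: dw; rewrite lexx ler01.
        - by move=> k; apply: sig_dist.
        - by move=> k; apply: sig_dist.
        - exact: conv_bip.
        - exact: conv_bip.
        - move=> k; have -> : c v (+) odd k = ~~ (c u (+) odd k).
            by move: cuv; case: (c u); case: (c v); case: (odd k).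
          exact: wass_sig_opp.
      split; last split => //.
      + case=> [[a _]|[[a _]|[[nb _]|[_ [_ [n hn]]]]]].
        * by move: a; rewrite a00 ltxx.
        * by move: a1; rewrite a eqxx.
        * by [].
        * have := walkn_parity hc hn; rewrite ev2 addbF => h.
          by move: cuv; rewrite h eqxx.
      + by case=> _ [b _]; move: b; rewrite b00 ltxx.
    have bgt0 : 0 < beta by rewrite lt_neqAle eq_sym bn0 (le_trans a0 ab).
    exists (1 / 2); split.
      rewrite a00.
      apply: (combine (a := fun k => sig R e c (c u (+) odd k)) (b := fun _ => pist R e)).
      - by move=> k; apply: dw; rewrite lexx ler01.
      - by move=> k; apply: dw.
      - by move=> k; apply: sig_dist.
      - by [].
      - exact: conv_bip.
      - by apply: conv_aperiodic => //; [rewrite (ltW bgt0) blt1 | left].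
      - by move=> k; apply: wass_sig_pi.
    split; last split => //.
    + case=> [[a _]|[[a _]|[[nb _]|[_ [b _]]]]].
      * by move: a; rewrite a00 ltxx.
      * by move: a1; rewrite a eqxx.
      * by [].
      * by move: bn0; rewrite b eqxx.
    + by case=> _ [b _]; move: bn0; rewrite b eqxx.
  exists 0; split.
    apply: (combine (a := fun _ => pist R e) (b := fun _ => pist R e)) => //.
    - by move=> k; apply: dw.
    - by move=> k; apply: dw.
    - by apply: conv_aperiodic => //; [rewrite a0 alt1 | right].
    - by apply: conv_aperiodic => //; [rewrite (le_trans a0 ab) blt1 | right].
    - by move=> k; apply: wass_self.
  split => //; split.
    by case=> _ [_ h]; exfalso; apply: h.
  by case=> _ [_ [_ hbp]]; exfalso; exact: nb hbp.
have agt0 : 0 < alpha by rewrite lt_neqAle eq_sym an0 a0.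
case: (eqVneq beta 1) => [b11|bn1].
  exists (wass e (pist R e) (delta R v)); split.
    apply: (combine (a := fun _ => pist R e) (b := fun _ => delta R v)) => //.
    - by move=> k; apply: dw.
    - by move=> k; apply: dw.
    - by move=> k; apply: delta_dist.
    - by apply: conv_aperiodic => //; [rewrite a0 alt1 | left].
    - by rewrite b11 (boolp.funext (walk_dist1 R e v)); apply: conv_const.
  split; last split.
  + case=> [[_ b]|[[a _]|[[_ [a _]]|[a _]]]].
    * by move: b; rewrite b11 ltxx.
    * by move: a1; rewrite a eqxx.
    * by move: an0; rewrite a eqxx.
    * by move: an0; rewrite a eqxx.
  + by case=> a _; move: an0; rewrite a eqxx.
  + by case=> a _; move: an0; rewrite a eqxx.
have blt1 : beta < 1 by rewrite lt_neqAle bn1 b1.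
exists 0; split.
  apply: (combine (a := fun _ => pist R e) (b := fun _ => pist R e)) => //.
  - by move=> k; apply: dw.
  - by move=> k; apply: dw.
  - by apply: conv_aperiodic => //; [rewrite a0 alt1 | left].
  - by apply: conv_aperiodic => //; [rewrite (le_trans a0 ab) blt1 | left; apply: lt_le_trans ab].
  - by move=> k; apply: wass_self.
split => //; split.
  by case=> a _; move: an0; rewrite a eqxx.
by case=> a _; move: an0; rewrite a eqxx.
Qed.
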